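(* Let $f,g$ be real analytic functions on $[-1,1]$, and for $\rho\in\mathbb{R}$ with $|\rho|$ sufficiently small let $x(t,\rho)$ denote the solution on $[-1,1]$ of the Abel equation $x'=f(t)x^3+g(t)x^2$ with $x(-1,\rho)=\rho$. Define $$H(t,\rho)=\int_{-1}^t\big(f(s)x(s,\rho)+g(s)\big)\,ds,\qquad G(t)=\int_{-1}^t g(s)\,ds,\qquad F(t)=\int_{-1}^t f(s)\,ds.$$ Then $$\frac{\partial^{j}}{\partial\rho^{j}}H(1,\rho)\Big|_{\rho=0}=j!\int_{-1}^1 f(t)\,G^{j-1}(t)\,dt\quad\text{for } j=1,2,$$ and $$\frac{\partial^{3}}{\partial\rho^{3}}H(1,\rho)\Big|_{\rho=0}=3!\int_{-1}^1 f(t)\,G^{2}(t)\,dt+3!\int_{-1}^1 f(t)\,F(t)\,dt.$$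
   Context: The solution $x(t,\rho)$ is analytic in $(t,\rho)$ and equivalently satisfies the integral equation $x(t,\rho)=\dfrac{\rho}{1-\rho H(t,\rho)}$ for $t\in[-1,1]$ and $|\rho|$ small. *)

(* Defs.v *)
From Stdlib Require Import Reals.
From Coquelicot Require Import Coquelicot.
Open Scope R_scope.

Definition analytic_at (f : R -> R) (t0 : R) : Prop :=
  exists (a : nat -> R) (r : R), 0 < r /\
    forall y, Rabs (y - t0) < r -> is_pseries a (y - t0) (f y).

Definition analytic_on_I (f : R -> R) : Prop :=
  forall t0, -1 <= t0 <= 1 -> analytic_at f t0.

Definition abel_solution (f g : R -> R) (y : R -> R) (rho : R) : Prop :=
  y (-1) = rho /\
  (forall t, -1 <= t <= 1 ->
     filterlim y (within (fun s => -1 <= s <= 1) (locally t)) (locally (y t))) /\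
  (forall t, -1 < t < 1 ->
     is_derive y t (f t * (y t) ^ 3 + g t * (y t) ^ 2)).

Definition Hfun (f g : R -> R) (x : R -> R -> R) (t rho : R) : R :=
  RInt (fun s => f s * x s rho + g s) (-1) t.

Definition prim (h : R -> R) (t : R) : R := RInt h (-1) t.

(* Main.v *)
Require Import Defs.
From Stdlib Require Import Reals Lra Lia Arith.
From Coquelicot Require Import Coquelicot.
Open Scope R_scope.

Lemma lim0_bounded (u : nat -> R) : is_lim_seq u 0 -> exists M, forall n, Rabs (u n) <= M.
Proof.
  intros H. apply is_lim_seq_Reals in H.
  destruct (H 1 Rlt_0_1) as [N HN].
  exists (1 + sum_f_R0 (fun k => Rabs (u k)) N).
  intros n. destruct (le_lt_dec N n) as [h|h].
  - specialize (HN n h). unfold R_dist in HN. rewrite Rminus_0_r in HN.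
    assert (0 <= sum_f_R0 (fun k => Rabs (u k)) N).
    { apply cond_pos_sum. intros; apply Rabs_pos. }
    lra.
  - assert (forall N n, (n <= N)%nat -> Rabs (u n) <= sum_f_R0 (fun k => Rabs (u k)) N).
    { clear. induction N; intros n hn.
      + assert (n = 0%nat) by lia. subst. simpl. lra.
      + change (Rabs (u n) <= sum_f_R0 (fun k => Rabs (u k)) N + Rabs (u (S N))).
        destruct (Nat.eq_dec n (S N)) as [->|hn'].
        * assert (0 <= sum_f_R0 (fun k => Rabs (u k)) N).
          { apply cond_pos_sum. intros; apply Rabs_pos. } lra.
        * assert (Rabs (u n) <= sum_f_R0 (fun k => Rabs (u k)) N) by (apply IHN; lia).
          pose proof (Rabs_pos (u (S N))). lra. }
    specialize (H0 N n ltac:(lia)). lra.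
Qed.

Lemma rad_lb_bounded (a : nat -> R) (r : R) : 0 <= r ->
  (exists M, forall n, Rabs (a n * r ^ n) <= M) -> Rbar_le r (CV_radius a).
Proof.
  intros Hr HM. destruct (CV_radius_bounded a) as [Hub _].
  apply Hub. exact HM.
Qed.

Lemma rad_geom (a : nat -> R) (K B rho : R) : 0 < B ->
  (forall n, Rabs (a n) <= K * B ^ n) -> Rabs rho < / B -> Rbar_lt (Rabs rho) (CV_radius a).
Proof.
  intros HB Ha Hr.
  assert (H: Rbar_le (/ B) (CV_radius a)).
  { apply rad_lb_bounded. left; apply Rinv_0_lt_compat; auto.
    exists K. intros n. rewrite Rabs_mult, <- RPow_abs, (Rabs_right (/B)).
    2: apply Rle_ge; left; apply Rinv_0_lt_compat; auto.
    apply Rle_trans with (K * B ^ n * (/B)^n).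
    apply Rmult_le_compat_r. apply pow_le; left; apply Rinv_0_lt_compat; auto. auto.
    rewrite Rmult_assoc, <- Rpow_mult_distr, Rinv_r, pow1. lra. lra. }
  destruct (CV_radius a) as [c| |]; simpl in *; auto. lra.
Qed.

Lemma ball_R (x e y : R) : ball x e y <-> Rabs (y - x) < e.
Proof. reflexivity. Qed.

Lemma cont_of_derive (h : R -> R) t l : is_derive h t l -> continuous h t.
Proof. intros H; apply (@ex_derive_continuous R_AbsRing R_NormedModule h t); exists l; exact H. Qed.

Lemma analytic_cont (f : R -> R) (t0 : R) : analytic_at f t0 -> continuous f t0.
Proof.
  intros [a [r [Hr Ha]]].
  assert (Hrad : Rbar_lt 0 (CV_radius a)).
  { assert (H: Rbar_le (r/2) (CV_radius a)).
    { apply rad_lb_bounded. lra.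
      apply lim0_bounded.
      assert (Hp := Ha (t0 + r/2)). 
      replace (t0 + r/2 - t0) with (r/2) in Hp by ring.
      assert (ex_series (fun n => scal ((r/2)^n) (a n))).
      { exists (f (t0 + r/2)). apply Hp. rewrite Rabs_right; lra. }
      apply ex_series_lim_0 in H. eapply is_lim_seq_ext; [|exact H].
      intros n; simpl. unfold scal; simpl. unfold mult; simpl. ring. }
    destruct (CV_radius a) as [c| |]; simpl in *; auto. lra. }
  apply continuous_ext_loc with (g := fun y => PSeries a (y - t0)).
  - assert (Hpos : 0 < r) by auto.
    exists (mkposreal r Hpos). intros y Hy. simpl.
    apply is_pseries_unique. apply Ha.
    rewrite <- ball_R. exact Hy.
  - apply (continuous_comp (fun y => y - t0) (PSeries a)).
    + apply (cont_of_derive _ _ 1). auto_derive; auto; ring.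
    + replace (t0 - t0) with 0 by ring. apply continuity_pt_filterlim.
      apply PSeries_continuity. rewrite Rabs_R0. auto.
Qed.

Lemma cR_mult (f g : R -> R) x : continuous f x -> continuous g x -> continuous (fun y => f y * g y) x.
Proof. intros; apply (@continuous_mult R_UniformSpace R_AbsRing); auto. Qed.
Lemma cR_plus (f g : R -> R) x : continuous f x -> continuous g x -> continuous (fun y => f y + g y) x.
Proof. intros; apply (@continuous_plus R_UniformSpace R_AbsRing R_NormedModule); auto. Qed.
Lemma cR_const (c x : R) : continuous (fun _ : R => c) x.
Proof. apply continuous_const. Qed.

Definition clamp (s : R) : R := Rmax (-1) (Rmin 1 s).

Lemma clamp_in s : -1 <= clamp s <= 1.
Proof. unfold clamp, Rmax, Rmin. repeat destruct Rle_dec; lra. Qed.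
Lemma clamp_id s : -1 <= s <= 1 -> clamp s = s.
Proof. unfold clamp, Rmax, Rmin. repeat destruct Rle_dec; lra. Qed.
Lemma clamp_lip a b : Rabs (clamp a - clamp b) <= Rabs (a - b).
Proof. unfold clamp, Rmax, Rmin. repeat destruct Rle_dec; unfold Rabs; repeat destruct Rcase_abs; lra. Qed.

Lemma clamp_cont s : continuous clamp s.
Proof.
  apply filterlim_locally. intros eps. exists eps. intros y Hy.
  apply ball_R. apply ball_R in Hy. eapply Rle_lt_trans; [apply clamp_lip|exact Hy].
Qed.

Definition ext (f : R -> R) (s : R) : R := f (clamp s).

Lemma ext_cont f : analytic_on_I f -> forall s, continuous (ext f) s.
Proof.
  intros Hf s. unfold ext. apply (continuous_comp clamp f).
  apply clamp_cont. apply analytic_cont. apply Hf. apply clamp_in.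
Qed.

Lemma ext_eq f s : -1 <= s <= 1 -> ext f s = f s.
Proof. intros; unfold ext; rewrite clamp_id; auto. Qed.

Lemma ext_bound f : analytic_on_I f -> exists M, 0 < M /\ forall s, Rabs (ext f s) <= M.
Proof.
  intros Hf.
  destruct (continuity_ab_maj (fun s => Rabs (ext f s)) (-1) 1) as [m [Hm _]].
  lra. intros c _. apply continuity_pt_filterlim. apply continuous_Rabs_comp. apply ext_cont; auto.
  exists (Rabs (ext f m) + 1). split. pose proof (Rabs_pos (ext f m)); lra.
  intros s. assert (ext f s = ext f (clamp s)).
  { unfold ext. rewrite (clamp_id (clamp s)); auto. apply clamp_in. }
  rewrite H. specialize (Hm (clamp s) (clamp_in s)). lra.
Qed.

Lemma ftc (phi : R -> R) (Hphi : forall s, continuous phi s) t :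
  is_derive (fun t => RInt phi (-1) t) t (phi t).
Proof.
  apply (is_derive_RInt phi (fun t => RInt phi (-1) t) (-1) t).
  - exists (mkposreal 1 Rlt_0_1). intros b _. apply (@RInt_correct R_CompleteNormedModule).
    apply (@ex_RInt_continuous R_CompleteNormedModule). intros; apply Hphi.
  - apply Hphi.
Qed.

Lemma cont_sum (u : nat -> R -> R) n x :
  (forall k, (k <= n)%nat -> continuous (u k) x) ->
  continuous (fun y => sum_f_R0 (fun k => u k y) n) x.
Proof.
  induction n; intros H.
  - simpl. apply H. lia.
  - simpl. apply cR_plus. apply IHn. intros; apply H; lia. apply H; lia.
Qed.

Lemma cont_PS_mult (a b : nat -> R -> R) n x :
  (forall k, (k <= n)%nat -> continuous (a k) x) ->
  (forall k, (k <= n)%nat -> continuous (b k) x) ->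
  continuous (fun y => PS_mult (fun i => a i y) (fun i => b i y) n) x.
Proof.
  intros Ha Hb. unfold PS_mult. apply (cont_sum (fun k y => a k y * b (n - k)%nat y)).
  intros k Hk. apply cR_mult. apply Ha; lia. apply Hb; lia.
Qed.

Definition Rn (fh gh : R -> R) (p : nat -> R -> R) (k : nat) (s : R) : R :=
  fh s * PS_mult (fun i => p i s) (PS_mult (fun i => p i s) (fun i => p i s)) k
  + gh s * PS_mult (fun i => p i s) (fun i => p i s) k.

Fixpoint cs (fh gh : R -> R) (n : nat) : nat -> R -> R :=
  match n with
  | O => fun _ _ => 0
  | S m => fun k t => if (k <=? m)%nat then cs fh gh m k t
                     else if (k =? S m)%nat then
                       (if (k =? 1)%nat then 1 else 0) + RInt (Rn fh gh (cs fh gh m) k) (-1) t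
                     else 0
  end.

Definition c (fh gh : R -> R) (n : nat) (t : R) : R := cs fh gh n n t.

Lemma cs_zero fh gh n : forall k t, (n < k)%nat -> cs fh gh n k t = 0.
Proof.
  induction n; intros k t H; simpl; auto.
  destruct (Nat.leb_spec k n). lia. destruct (Nat.eqb_spec k (S n)). lia. auto.
Qed.

Lemma cs_stable fh gh n : forall k t, (k <= n)%nat -> cs fh gh n k t = c fh gh k t.
Proof.
  induction n; intros k t H.
  - assert (k = 0%nat) by lia. subst. reflexivity.
  - destruct (Nat.eq_dec k (S n)). subst. reflexivity.
    simpl. destruct (Nat.leb_spec k n). apply IHn; auto. lia.
Qed.

Lemma c0 fh gh t : c fh gh 0 t = 0.
Proof. reflexivity. Qed.

Lemma PS_mult_ext (a a' b b' : nat -> R) n :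
  a 0%nat = 0 -> a' 0%nat = 0 -> b 0%nat = 0 -> b' 0%nat = 0 ->
  (forall i, (1 <= i < n)%nat -> a i = a' i) ->
  (forall i, (1 <= i < n)%nat -> b i = b' i) ->
  PS_mult a b n = PS_mult a' b' n.
Proof.
  intros A0 A0' B0 B0' HA HB. unfold PS_mult. apply sum_eq. intros k Hk.
  destruct (Nat.eq_dec k 0). subst. rewrite A0, A0'. ring.
  destruct (Nat.eq_dec k n). subst. rewrite Nat.sub_diag, B0, B0'. ring.
  rewrite HA, HB. auto. lia. lia.
Qed.

Lemma PS_mult_0 (a b : nat -> R) : a 0%nat = 0 -> PS_mult a b 0 = 0.
Proof. intros H. unfold PS_mult. simpl. rewrite H. ring. Qed.

Lemma Rn_ext fh gh (p q : nat -> R -> R) n s :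
  p 0%nat s = 0 -> q 0%nat s = 0 -> (forall i, (1 <= i < n)%nat -> p i s = q i s) ->
  Rn fh gh p n s = Rn fh gh q n s.
Proof.
  intros P0 Q0 H. unfold Rn.
  assert (E2 : forall j, (j <= n)%nat -> PS_mult (fun i => p i s) (fun i => p i s) j
                   = PS_mult (fun i => q i s) (fun i => q i s) j).
  { intros j Hj. apply PS_mult_ext; auto; intros; apply H; lia. }
  rewrite E2 by lia. f_equal. f_equal.
  apply PS_mult_ext; auto.
  apply PS_mult_0; auto. apply PS_mult_0; auto.
  all: intros i Hi; first [apply E2; lia | apply H; lia].
Qed.

Lemma cs_S fh gh m k t : cs fh gh (S m) k t =
  if (k <=? m)%nat then cs fh gh m k t
  else if (k =? S m)%nat then
    (if (k =? 1)%nat then 1 else 0) + RInt (Rn fh gh (cs fh gh m) k) (-1) t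
  else 0.
Proof. reflexivity. Qed.

Lemma c_eq fh gh n t : (1 <= n)%nat ->
  c fh gh n t = (if (n =? 1)%nat then 1 else 0) + RInt (Rn fh gh (cs fh gh (pred n)) n) (-1) t.
Proof.
  intros Hn. destruct n. lia. unfold c at 1. simpl pred.
  rewrite cs_S. assert (E: (S n <=? n)%nat = false) by (apply Nat.leb_gt; lia).
  rewrite E, Nat.eqb_refl. reflexivity.
Qed.

Lemma Rn_cs fh gh n s : Rn fh gh (cs fh gh n) (S n) s = Rn fh gh (c fh gh) (S n) s.
Proof.
  apply Rn_ext. rewrite cs_stable; [reflexivity|lia]. reflexivity.
  intros i Hi. apply cs_stable. lia.
Qed.

Lemma cont_Rn fh gh p n x :
  continuous fh x -> continuous gh x -> (forall k, (k <= n)%nat -> continuous (p k) x) ->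
  continuous (Rn fh gh p n) x.
Proof.
  intros Hf Hg Hp. unfold Rn. apply cR_plus; apply cR_mult; auto.
  apply (cont_PS_mult p (fun j y => PS_mult (fun i => p i y) (fun i => p i y) j)); auto.
  intros k Hk. apply cont_PS_mult; intros; apply Hp; lia.
  apply cont_PS_mult; auto.
Qed.

Lemma isd_const (k t : R) : is_derive (fun _ : R => k) t 0.
Proof. apply (@is_derive_const R_AbsRing R_NormedModule). Qed.

Lemma isd_plus_const (k : R) (F : R -> R) t l : is_derive F t l ->
  is_derive (fun t => k + F t) t l.
Proof. intros H. replace l with (0 + l) by ring.
  apply (@is_derive_plus R_AbsRing R_NormedModule (fun _ => k) F). apply isd_const. auto. Qed.

Lemma c_props fh gh (Hf : forall s, continuous fh s) (Hg : forall s, continuous gh s) n :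
  forall t, continuous (c fh gh n) t /\ is_derive (c fh gh n) t (Rn fh gh (c fh gh) n t).
Proof.
  induction n as [n IH] using lt_wf_ind. intros t.
  destruct n.
  - split. apply cR_const.
    replace (Rn fh gh (c fh gh) 0 t) with 0.
    apply is_derive_ext with (f := fun _ => 0). reflexivity. apply isd_const. unfold Rn, PS_mult. simpl. unfold c; simpl. ring.
  - assert (Hphi : forall s, continuous (Rn fh gh (cs fh gh n) (S n)) s).
    { intros s. apply cont_Rn; auto. intros k Hk.
      destruct (Nat.eq_dec k (S n)). subst.
      apply continuous_ext with (f := fun _ => 0). intros; rewrite cs_zero; auto. apply cR_const.
      apply continuous_ext with (f := c fh gh k). intros; rewrite cs_stable; auto. lia.
      apply IH. lia. }
    assert (D : is_derive (c fh gh (S n)) t (Rn fh gh (c fh gh) (S n) t)).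
    { apply is_derive_ext with (f := fun t => (if (S n =? 1)%nat then 1 else 0) + RInt (Rn fh gh (cs fh gh n) (S n)) (-1) t).
      intros; rewrite (c_eq _ _ (S n)). reflexivity. lia.
      rewrite <- Rn_cs. 
      apply isd_plus_const. apply ftc. auto. }
    split; auto. apply (cont_of_derive _ _ _ D).
Qed.

Definition w (n : nat) : R := match n with O => 0 | S _ => / (INR n * INR n) end.

Lemma w_nonneg n : 0 <= w n.
Proof. destruct n. change (w 0) with 0. lra. unfold w. left. apply Rinv_0_lt_compat. apply Rmult_lt_0_compat; apply lt_0_INR; lia. Qed.

Lemma w_le1 n : w n <= 1.
Proof. destruct n. change (w 0) with 0. lra. unfold w. rewrite <- Rinv_1. apply Rinv_le_contravar. lra.
  assert (1 <= INR (S n)) by (apply (le_INR 1); lia). nra. Qed.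

Lemma sum_w n : sum_f_R0 w (S n) <= 2 - / (INR n + 1).
Proof.
  induction n.
  - simpl. change (w 0) with 0. replace (/ (1 * 1)) with 1 by field. replace (/ (0 + 1)) with 1 by field. lra.
  - rewrite tech5. unfold w at 2. rewrite !S_INR.
    assert (0 <= INR n) by apply pos_INR.
    assert (/ ((INR n + 1 + 1) * (INR n + 1 + 1)) <= / (INR n + 1) - / (INR n + 1 + 1)).
    { replace (/ (INR n + 1) - / (INR n + 1 + 1)) with (/ ((INR n + 1) * (INR n + 2))) by (field; lra).
      apply Rinv_le_contravar. nra. nra. }
    lra.
Qed.

Lemma sum_w2 n : sum_f_R0 w n <= 2.
Proof. destruct n. simpl. change (w 0) with 0. lra.
  pose proof (sum_w n). assert (0 < / (INR n + 1)). apply Rinv_0_lt_compat. pose proof (pos_INR n); lra. lra. Qed.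

Lemma sum_rev (u : nat -> R) n : sum_f_R0 (fun k => u (n - k)%nat) n = sum_f_R0 u n.
Proof.
  revert u. induction n; intros u. reflexivity.
  rewrite decomp_sum by lia. simpl pred. rewrite tech5.
  rewrite Nat.sub_0_r.
  rewrite (sum_eq _ (fun k => u (n - k)%nat)). rewrite IHn. ring.
  intros i _. f_equal.
Qed.

Lemma w_prod n k : (1 <= n)%nat -> (k <= n)%nat -> w k * w (n - k) <= 2 * w n * (w k + w (n - k)).
Proof.
  intros Hn Hk.
  pose proof (w_nonneg n). pose proof (w_nonneg k). pose proof (w_nonneg (n - k)).
  destruct (Nat.eq_dec k 0). subst. change (w 0) with 0. rewrite Rmult_0_l. nra.
  destruct (Nat.eq_dec k n). subst. rewrite Nat.sub_diag. change (w 0) with 0. rewrite Rmult_0_r. nra.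
  destruct n as [|n]. lia. destruct k as [|k]. lia.
  destruct (S n - S k)%nat as [|m] eqn:E. lia.
  unfold w.
  assert (Hab : INR (S n) = INR (S k) + INR (S m)).
  { rewrite <- plus_INR. f_equal. lia. }
  rewrite Hab.
  set (a := INR (S k)). set (b := INR (S m)).
  assert (0 < a) by (apply lt_0_INR; lia). assert (0 < b) by (apply lt_0_INR; lia).
  set (D := a*a*b*b*(a+b)*(a+b)).
  assert (HD : 0 < D) by (unfold D; repeat apply Rmult_lt_0_compat; lra).
  replace (/ (a * a) * / (b * b)) with ((a+b)*(a+b) * / D) by (unfold D; field; lra).
  replace (2 * / ((a + b) * (a + b)) * (/ (a * a) + / (b * b))) with (2*(a*a+b*b) * / D)
    by (unfold D; field; lra).
  apply Rmult_le_compat_r. left; apply Rinv_0_lt_compat; auto. pose proof (Rle_0_sqr (a-b)) as Hs; unfold Rsqr in Hs; nra.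
Qed.

Lemma conv_w n : PS_mult w w n <= 8 * w n.
Proof.
  destruct n. unfold PS_mult. simpl. lra.
  unfold PS_mult.
  apply Rle_trans with (sum_f_R0 (fun k => 2 * w (S n) * (w k + w (S n - k)%nat)) (S n)).
  apply sum_Rle. intros k Hk. apply w_prod; lia.
  rewrite (sum_eq _ (fun k => (w k + w (S n - k)%nat) * (2 * w (S n)))) by (intros; ring).
  rewrite <- scal_sum, plus_sum, (sum_rev w).
  pose proof (sum_w2 (S n)). pose proof (w_nonneg (S n)). nra.
Qed.

Definition bb (A B : R) (n : nat) : R := A * B ^ n * w n.

Lemma bb_nonneg A B n : 0 <= A -> 0 <= B -> 0 <= bb A B n.
Proof. intros; unfold bb. apply Rmult_le_pos. apply Rmult_le_pos; auto. apply pow_le; auto. apply w_nonneg. Qed.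

Lemma conv_bb A B n : 0 <= A -> 0 <= B -> PS_mult (bb A B) (bb A B) n <= 8 * (A * A) * B ^ n * w n.
Proof.
  intros HA HB. unfold PS_mult, bb.
  rewrite (sum_eq _ (fun k => w k * w (n - k)%nat * (A * A * B ^ n))).
  rewrite <- scal_sum. pose proof (conv_w n). unfold PS_mult in H.
  assert (0 <= A * A * B ^ n) by (apply Rmult_le_pos; [nra| apply pow_le; auto]). nra.
  intros k Hk. assert (E : B ^ n = B ^ k * B ^ (n - k)) by (rewrite <- pow_add; f_equal; lia).
  rewrite E. ring.
Qed.

Lemma conv3_bb A B n : 0 <= A -> 0 <= B ->
  PS_mult (bb A B) (PS_mult (bb A B) (bb A B)) n <= 64 * (A * A * A) * B ^ n * w n.
Proof.
  intros HA HB. unfold PS_mult at 1.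
  apply Rle_trans with (sum_f_R0 (fun k => bb A B k * (8 * (A * A) * B ^ (n - k) * w (n - k)%nat)) n).
  apply sum_Rle. intros k Hk. apply Rmult_le_compat_l. apply bb_nonneg; auto. apply conv_bb; auto.
  unfold bb. rewrite (sum_eq _ (fun k => w k * w (n - k)%nat * (8 * (A * A * A) * B ^ n))).
  rewrite <- scal_sum. pose proof (conv_w n). unfold PS_mult in H.
  assert (0 <= 8 * (A * A * A) * B ^ n) by (apply Rmult_le_pos; [nra| apply pow_le; auto]). nra.
  intros k Hk. assert (E : B ^ n = B ^ k * B ^ (n - k)) by (rewrite <- pow_add; f_equal; lia).
  rewrite E. ring.
Qed.

Lemma conv_abs (a a' al al' : nat -> R) n :
  (forall k, (k <= n)%nat -> Rabs (a k) <= al k) -> (forall k, (k <= n)%nat -> Rabs (a' k) <= al' k) ->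
  Rabs (PS_mult a a' n) <= PS_mult al al' n.
Proof.
  intros H1 H2. unfold PS_mult. eapply Rle_trans. apply sum_f_R0_triangle.
  apply sum_Rle. intros k Hk. rewrite Rabs_mult. apply Rmult_le_compat; try apply Rabs_pos.
  apply H1; lia. apply H2; lia.
Qed.

Lemma conv_abs_nonneg (al al' : nat -> R) n :
  (forall k, 0 <= al k) -> (forall k, 0 <= al' k) -> 0 <= PS_mult al al' n.
Proof. intros; unfold PS_mult. apply cond_pos_sum. intros; apply Rmult_le_pos; auto. Qed.

Lemma Rn_bound fh gh p n s A B M : 0 <= A -> 0 <= B ->
  Rabs (fh s) <= M -> Rabs (gh s) <= M ->
  (forall k, (k <= n)%nat -> Rabs (p k s) <= bb A B k) ->
  Rabs (Rn fh gh p n s) <= M * (64 * (A*A*A) + 8 * (A*A)) * B ^ n * w n.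
Proof.
  intros HA HB Hf Hg Hp. unfold Rn.
  assert (C2 : forall j, (j <= n)%nat -> Rabs (PS_mult (fun i => p i s) (fun i => p i s) j) <= PS_mult (bb A B) (bb A B) j).
  { intros j Hj. apply conv_abs; intros; apply Hp; lia. }
  assert (C3 : Rabs (PS_mult (fun i => p i s) (PS_mult (fun i => p i s) (fun i => p i s)) n)
               <= PS_mult (bb A B) (PS_mult (bb A B) (bb A B)) n).
  { apply conv_abs. intros; apply Hp; lia. intros; apply C2; lia. }
  pose proof (conv_bb A B n HA HB). pose proof (conv3_bb A B n HA HB).
  pose proof (C2 n (le_n n)).
  eapply Rle_trans. apply Rabs_triang. rewrite !Rabs_mult.
  assert (0 <= M) by (eapply Rle_trans; [apply Rabs_pos|exact Hf]).
  apply Rle_trans with (M * PS_mult (bb A B) (PS_mult (bb A B) (bb A B)) n + M * PS_mult (bb A B) (bb A B) n).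
  apply Rplus_le_compat; apply Rmult_le_compat; try apply Rabs_pos; auto.
  assert (M * PS_mult (bb A B) (PS_mult (bb A B) (bb A B)) n <= M * (64 * (A * A * A) * B ^ n * w n))
    by (apply Rmult_le_compat_l; auto).
  assert (M * PS_mult (bb A B) (bb A B) n <= M * (8 * (A * A) * B ^ n * w n))
    by (apply Rmult_le_compat_l; auto).
  replace (M * (64 * (A * A * A) + 8 * (A * A)) * B ^ n * w n) with
    (M * (64 * (A * A * A) * B ^ n * w n) + M * (8 * (A * A) * B ^ n * w n)) by ring.
  lra.
Qed.

Lemma RInt_bound (phi : R -> R) (Hphi : forall s, continuous phi s) t K :
  (forall s, Rmin (-1) t <= s <= Rmax (-1) t -> Rabs (phi s) <= K) ->
  Rabs (RInt phi (-1) t) <= Rabs (t - (-1)) * K.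
Proof.
  intros H. apply (@norm_RInt_le_const_abs R_NormedModule phi (-1) t (RInt phi (-1) t) K).
  exact H. apply (@RInt_correct R_CompleteNormedModule).
  apply (@ex_RInt_continuous R_CompleteNormedModule). intros; apply Hphi.
Qed.

Lemma between_2 t s : Rabs t <= 2 -> Rmin (-1) t <= s <= Rmax (-1) t -> Rabs s <= 2.
Proof. unfold Rmin, Rmax. destruct Rle_dec; unfold Rabs; repeat destruct Rcase_abs; lra. Qed.

Lemma RInt_zero (phi : R -> R) t : (forall s, phi s = 0) -> RInt phi (-1) t = 0.
Proof.
  intros H. rewrite (RInt_ext phi (fun _ => 0)). rewrite RInt_const.
  unfold scal; simpl; unfold mult; simpl; ring. intros; apply H.
Qed.

Lemma c1 fh gh t : c fh gh 1 t = 1.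
Proof.
  rewrite c_eq by lia. simpl. rewrite RInt_zero. ring.
  intros s. unfold Rn, PS_mult. simpl. ring.
Qed.

Lemma c_bound fh gh (Hf : forall s, continuous fh s) (Hg : forall s, continuous gh s)
  M A B (HfM : forall s, Rabs (fh s) <= M) (HgM : forall s, Rabs (gh s) <= M)
  (HA : 0 < A) (HB : 0 <= B) (HAB : A * B = 1) (HK : 3 * (M * (64 * (A*A*A) + 8 * (A*A))) <= A) :
  forall n t, Rabs t <= 2 -> Rabs (c fh gh n t) <= bb A B n.
Proof.
  induction n as [n IH] using lt_wf_ind. intros t Ht.
  destruct n as [|m].
  - rewrite c0, Rabs_R0. apply bb_nonneg; lra.
  - destruct (Nat.eq_dec m 0). subst. rewrite c1. unfold bb, w. simpl. rewrite Rabs_R1.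
    replace (A * (B * 1) * / (1 * 1)) with (A * B) by field. lra.
    rewrite c_eq by lia. simpl pred.
    replace (if (S m =? 1)%nat then 1 else 0) with 0 by (destruct m; [lia|reflexivity]).
    rewrite Rplus_0_l.
    eapply Rle_trans. apply RInt_bound.
    + intros s. apply cont_Rn; auto. intros k Hk.
      destruct (Nat.eq_dec k (S m)). subst.
      apply continuous_ext with (f := fun _ => 0). intros; rewrite cs_zero; auto. apply cR_const.
      apply continuous_ext with (f := c fh gh k). intros; rewrite cs_stable; auto. lia.
      apply c_props; auto.
    + intros s Hs. apply (Rn_bound fh gh _ _ s A B M). lra. auto. auto. auto.
      intros k Hk. destruct (Nat.eq_dec k (S m)). subst. rewrite cs_zero, Rabs_R0. apply bb_nonneg; lra. lia.
      rewrite cs_stable by lia. apply IH. lia. eapply between_2; eauto.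
    + assert (Rabs (t - -1) <= 3) by (unfold Rabs in *; repeat destruct Rcase_abs; lra).
      unfold bb.
      assert (0 <= B ^ S m * w (S m)) by (apply Rmult_le_pos; [apply pow_le; auto| apply w_nonneg]).
      assert (0 <= M * (64 * (A * A * A) + 8 * (A * A))).
      { apply Rmult_le_pos. eapply Rle_trans; [apply Rabs_pos| apply (HfM 0)]. nra. }
      replace (M * (64 * (A * A * A) + 8 * (A * A)) * B ^ S m * w (S m)) with
        ((M * (64 * (A * A * A) + 8 * (A * A))) * (B ^ S m * w (S m))) by ring.
      replace (A * B ^ S m * w (S m)) with (A * (B ^ S m * w (S m))) by ring.
      apply Rle_trans with (3 * ((M * (64 * (A * A * A) + 8 * (A * A))) * (B ^ S m * w (S m)))).
      apply Rmult_le_compat_r. apply Rmult_le_pos; auto. auto.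
      rewrite <- Rmult_assoc. apply Rmult_le_compat_r; auto.
Qed.

Lemma isd_plus (F G : R -> R) t a b : is_derive F t a -> is_derive G t b ->
  is_derive (fun y => F y + G y) t (a + b).
Proof. intros; apply (@is_derive_plus R_AbsRing R_NormedModule); auto. Qed.

Lemma ex_series_geom_bound (u : nat -> R) K q : 0 <= q < 1 ->
  (forall n, Rabs (u n) <= K * q ^ n) -> ex_series u.
Proof.
  intros Hq H. apply (@ex_series_le R_AbsRing R_CompleteNormedModule u (fun n => K * q ^ n)).
  intros n; apply H.
  exists (K * / (1 - q)). apply (is_series_scal K (fun n => q ^ n) (/ (1 - q))).
  apply is_series_geom. rewrite Rabs_right; lra.
Qed.

Lemma ser_deriv (u u' : nat -> R -> R) K q t :
  0 <= q < 1 -> (forall n y, is_derive (u n) y (u' n y)) ->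
  (forall n y, Rabs y < 2 -> Rabs (u n y) <= K * q ^ n) ->
  (forall n y, Rabs y < 2 -> Rabs (u' n y) <= K * q ^ n) ->
  Rabs t < 2 ->
  is_derive (fun y => Series (fun n => u n y)) t (Series (fun n => u' n t)).
Proof.
  intros Hq Hd Hu Hu' Ht.
  assert (HK : 0 <= K). { specialize (Hu 0%nat 0). rewrite pow_O, Rmult_1_r in Hu.
    eapply Rle_trans; [apply Rabs_pos| apply Hu]. rewrite Rabs_R0; lra. }
  assert (H2 : 0 < 2) by lra.
  assert (CVN : CVN_r u' (mkposreal 2 H2)).
  { exists (fun n => K * q ^ n). exists (K * / (1 - q)). split.
    - assert (Hs : is_series (fun n => K * q ^ n) (K * / (1 - q))).
      { apply (is_series_scal K (fun n => q ^ n) (/ (1 - q))). apply is_series_geom. rewrite Rabs_right; lra. }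
      apply is_series_Reals in Hs. intros eps Heps. destruct (Hs eps Heps) as [N HN].
      exists N. intros n Hn. rewrite (sum_eq _ (fun n => K * q ^ n)). apply HN; auto.
      intros i _. rewrite Rabs_right. auto. apply Rle_ge, Rmult_le_pos; auto. apply pow_le; lra.
    - intros n y Hy. apply Hu'. unfold Boule in Hy. simpl in Hy. rewrite Rminus_0_r in Hy. auto. }
  destruct (CVN_CVU_r u' (mkposreal 2 H2) CVN t Ht) as [e He].
  assert (Hd0 : 0 < Rmin e (2 - Rabs t)) by (apply Rmin_pos; [apply cond_pos| lra]).
  set (d := mkposreal _ Hd0).
  assert (Hball : forall y, Boule t d y -> Rabs y < 2).
  { intros y Hy. unfold Boule in Hy. simpl in Hy. pose proof (Rmin_r e (2 - Rabs t)).
    pose proof (Rabs_triang_inv y t). pose proof (Rabs_triang (y - t) t).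
    replace (y - t + t) with y in H1 by ring. lra. }
  apply is_derive_Reals.
  apply (CVU_derivable (SP u) (SP u') (fun y => Series (fun n => u n y)) (fun x0 => Series (fun n => u' n x0)) t d).
  - intros eps Heps. destruct (He eps Heps) as [N HN]. exists N. intros n y Hn Hy.
    apply HN; auto. unfold Boule in *. simpl in Hy. pose proof (Rmin_l e (2 - Rabs t)). lra.
  - intros y Hy. unfold SP.
    assert (Hs : is_series (fun n => u n y) (Series (fun n => u n y))).
    { apply Series_correct. apply ex_series_geom_bound with K q; auto. }
    apply is_series_Reals in Hs. exact Hs.
  - intros n y Hy. apply is_derive_Reals. unfold SP. induction n.
    + simpl. apply Hd.
    + simpl. apply isd_plus; auto.
  - unfold Boule. rewrite Rminus_diag, Rabs_R0. apply cond_pos.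
Qed.

Definition good (fh gh : R -> R) (M A B : R) : Prop :=
  (forall s, continuous fh s) /\ (forall s, continuous gh s) /\
  (forall s, Rabs (fh s) <= M) /\ (forall s, Rabs (gh s) <= M) /\
  0 < A /\ 0 <= B /\ A * B = 1 /\ 3 * (M * (64 * (A*A*A) + 8 * (A*A))) <= A.

Lemma good_cbound fh gh M A B : good fh gh M A B ->
  forall n t, Rabs t <= 2 -> Rabs (c fh gh n t) <= A * B ^ n.
Proof.
  intros (Hf & Hg & HfM & HgM & HA & HB & HAB & HK) n t Ht.
  eapply Rle_trans. apply (c_bound fh gh Hf Hg M A B); auto.
  unfold bb. pose proof (w_le1 n). pose proof (w_nonneg n).
  assert (0 <= A * B ^ n) by (apply Rmult_le_pos; [lra|apply pow_le; auto]). nra.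
Qed.

Lemma good_Rnbound fh gh M A B : good fh gh M A B ->
  forall n t, Rabs t <= 2 -> Rabs (Rn fh gh (c fh gh) n t) <= A * B ^ n.
Proof.
  intros HG n t Ht. pose proof HG as (Hf & Hg & HfM & HgM & HA & HB & HAB & HK).
  destruct n as [|m].
  - replace (Rn fh gh (c fh gh) 0 t) with 0. rewrite Rabs_R0. simpl; lra.
    unfold Rn, PS_mult; simpl. unfold c; simpl. ring.
  - rewrite <- Rn_cs. eapply Rle_trans. apply (Rn_bound fh gh _ _ t A B M). lra. auto. auto. auto.
    intros k Hk. destruct (Nat.eq_dec k (S m)). subst. rewrite cs_zero, Rabs_R0. apply bb_nonneg; lra. lia.
    rewrite cs_stable by lia. apply (c_bound fh gh Hf Hg M A B); auto.
    pose proof (w_le1 (S m)). pose proof (w_nonneg (S m)).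
    assert (0 <= B ^ S m) by (apply pow_le; auto).
    assert (0 <= M * (64 * (A * A * A) + 8 * (A * A))).
    { apply Rmult_le_pos. eapply Rle_trans; [apply Rabs_pos| apply (HfM 0)]. nra. }
    replace (M * (64 * (A * A * A) + 8 * (A * A)) * B ^ S m * w (S m)) with
        ((M * (64 * (A * A * A) + 8 * (A * A))) * (B ^ S m * w (S m))) by ring.
    assert (B ^ S m * w (S m) <= B ^ S m) by nra.
    assert (0 <= B ^ S m * w (S m)) by nra.
    nra.
Qed.

Lemma good_conv2 fh gh M A B : good fh gh M A B ->
  forall n t, Rabs t <= 2 ->
  Rabs (PS_mult (fun i => c fh gh i t) (fun i => c fh gh i t) n) <= 8 * (A * A) * B ^ n.
Proof.
  intros HG n t Ht. pose proof HG as (Hf & Hg & HfM & HgM & HA & HB & HAB & HK).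
  eapply Rle_trans. apply conv_abs with (al := bb A B) (al' := bb A B);
    intros; apply (c_bound fh gh Hf Hg M A B); auto.
  eapply Rle_trans. apply conv_bb; lra.
  pose proof (w_le1 n). pose proof (w_nonneg n).
  assert (0 <= 8 * (A * A) * B ^ n) by (apply Rmult_le_pos; [nra|apply pow_le; auto]). nra.
Qed.

Lemma isd_mult_const (F : R -> R) t l k : is_derive F t l -> is_derive (fun y => F y * k) t (l * k).
Proof. intros H. replace (l * k) with (k * l) by ring. apply (@is_derive_ext R_AbsRing R_NormedModule (fun y => k * F y) (fun y => F y * k)).
  intros y; apply Rmult_comm. apply is_derive_scal. auto. Qed.

Definition X fh gh (rho t : R) : R := PSeries (fun n => c fh gh n t) rho.

Lemma geom_bound A B rho n : 0 <= B -> Rabs (A * B ^ n * rho ^ n) = Rabs A * (B * Rabs rho) ^ n.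
Proof. intros HB. rewrite !Rabs_mult, <- !RPow_abs, Rpow_mult_distr, (Rabs_right B) by lra. ring. Qed.

Lemma X_deriv fh gh M A B rho t : good fh gh M A B -> B * Rabs rho < 1 -> Rabs t < 2 ->
  is_derive (X fh gh rho) t (fh t * (X fh gh rho t) ^ 3 + gh t * (X fh gh rho t) ^ 2).
Proof.
  intros HG Hr Ht. pose proof HG as (Hf & Hg & HfM & HgM & HA & HB & HAB & HK).
  assert (Hq : 0 <= B * Rabs rho < 1) by (split; auto; apply Rmult_le_pos; auto; apply Rabs_pos).
  assert (Hrad : Rabs rho < / B).
  { destruct HB as [HB|HB]. apply (Rmult_lt_reg_l B); auto. rewrite Rinv_r by lra. lra.
    subst. lra. }
  assert (HB' : 0 < B) by (destruct HB; auto; subst; lra).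
  assert (D : is_derive (fun y => Series (fun n => c fh gh n y * rho ^ n)) t
                 (Series (fun n => Rn fh gh (c fh gh) n t * rho ^ n))).
  { apply (ser_deriv (fun n y => c fh gh n y * rho ^ n) (fun n y => Rn fh gh (c fh gh) n y * rho ^ n)
                 A (B * Rabs rho) t Hq).
    - intros n y. apply isd_mult_const. apply c_props; auto.
    - intros n y Hy. rewrite Rabs_mult, <- RPow_abs, Rpow_mult_distr, <- Rmult_assoc.
      apply Rmult_le_compat_r. apply pow_le, Rabs_pos. apply good_cbound with M; auto. lra.
    - intros n y Hy. rewrite Rabs_mult, <- RPow_abs, Rpow_mult_distr, <- Rmult_assoc.
      apply Rmult_le_compat_r. apply pow_le, Rabs_pos. apply good_Rnbound with M; auto. lra.
    - auto. }
  replace (fh t * X fh gh rho t ^ 3 + gh t * X fh gh rho t ^ 2) with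
     (Series (fun n => Rn fh gh (c fh gh) n t * rho ^ n)).
  exact D. clear D.
  set (a := fun i => c fh gh i t).
  assert (Ha : Rbar_lt (Rabs rho) (CV_radius a)).
  { apply rad_geom with A B; auto. intros n; apply good_cbound with M; auto. lra. }
  assert (Ha2 : Rbar_lt (Rabs rho) (CV_radius (PS_mult a a))).
  { apply rad_geom with (8 * (A * A)) B; auto. intros n; apply good_conv2 with M; auto. lra. }
  assert (HX : is_pseries a rho (X fh gh rho t)).
  { apply PSeries_correct. apply CV_radius_inside; auto. }
  assert (H2 : is_pseries (PS_mult a a) rho (X fh gh rho t * X fh gh rho t)).
  { apply is_pseries_mult; auto. }
  assert (H3 : is_pseries (PS_mult a (PS_mult a a)) rho (X fh gh rho t * (X fh gh rho t * X fh gh rho t))).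
  { apply is_pseries_mult; auto. }
  assert (H : is_pseries (PS_plus (PS_scal (fh t) (PS_mult a (PS_mult a a))) (PS_scal (gh t) (PS_mult a a))) rho
     (plus (scal (fh t) (X fh gh rho t * (X fh gh rho t * X fh gh rho t))) (scal (gh t) (X fh gh rho t * X fh gh rho t)))).
  { apply (@is_pseries_plus R_AbsRing R_NormedModule); apply (@is_pseries_scal R_AbsRing R_NormedModule); auto; unfold mult; simpl; ring. }
  apply is_pseries_unique in H. unfold PSeries in H.
  replace (fh t * X fh gh rho t ^ 3 + gh t * X fh gh rho t ^ 2) with
    (plus (scal (fh t) (X fh gh rho t * (X fh gh rho t * X fh gh rho t))) (scal (gh t) (X fh gh rho t * X fh gh rho t))).
  rewrite <- H. apply Series_ext. intros n. unfold PS_plus, PS_scal, Rn. reflexivity.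
  unfold plus, scal; simpl; unfold mult; simpl. ring.
Qed.

Lemma within_clamp (y : R -> R) s0 :
  (forall t, -1 <= t <= 1 -> filterlim y (within (fun s => -1 <= s <= 1) (locally t)) (locally (y t))) ->
  continuous (fun s => y (clamp s)) s0.
Proof.
  intros H. unfold continuous.
  apply filterlim_comp with (G := within (fun s => -1 <= s <= 1) (locally (clamp s0))).
  - intros P HP. unfold within in HP.
    assert (Hc := clamp_cont s0). unfold continuous in Hc.
    specialize (Hc _ HP). unfold filtermap in *.
    eapply filter_imp; [|exact Hc]. intros s Hs. simpl in *. apply Hs. apply clamp_in.
  - apply H. apply clamp_in.
Qed.

Lemma ode_uniq (y z Fy Fz : R -> R) L :
  0 <= L ->
  (forall t, -1 <= t <= 1 -> continuous y t) -> (forall t, -1 <= t <= 1 -> continuous z t) ->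
  (forall t, -1 < t < 1 -> is_derive y t (Fy t)) -> (forall t, -1 < t < 1 -> is_derive z t (Fz t)) ->
  (forall t, -1 <= t <= 1 -> Rabs (Fy t - Fz t) <= L * Rabs (y t - z t)) ->
  y (-1) = z (-1) ->
  forall t, -1 <= t <= 1 -> y t = z t.
Proof.
  intros HL Cy Cz Dy Dz Lip H0 t Ht.
  set (phi := fun s => exp (-2 * L * s) * ((y s - z s) * (y s - z s))).
  set (dphi := fun s => exp (-2 * L * s) * (-2 * L * ((y s - z s) * (y s - z s)) + 2 * (y s - z s) * (Fy s - Fz s))).
  destruct (Req_dec t (-1)) as [->|Hne]. auto.
  destruct (MVT_gen phi (-1) t dphi) as [cc [Hc Heq]].
  - intros s Hs. rewrite Rmin_left in Hs by lra. rewrite Rmax_right in Hs by lra.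
    unfold phi, dphi.
    assert (Dd : is_derive (fun s => y s - z s) s (Fy s - Fz s)).
    { apply (@is_derive_minus R_AbsRing R_NormedModule); [apply Dy|apply Dz]; lra. }
    assert (De : is_derive (fun s => exp (-2 * L * s)) s (-2 * L * exp (-2 * L * s))).
    { auto_derive. auto. ring. }
    assert (Dsq : is_derive (fun s => (y s - z s) * (y s - z s)) s (2 * (y s - z s) * (Fy s - Fz s))).
    { replace (2 * (y s - z s) * (Fy s - Fz s)) with ((Fy s - Fz s) * (y s - z s) + (y s - z s) * (Fy s - Fz s)) by ring.
      apply (@is_derive_mult R_AbsRing (fun s => y s - z s) (fun s => y s - z s)); auto. intros; apply Rmult_comm. }
    replace (exp (-2 * L * s) * (-2 * L * ((y s - z s) * (y s - z s)) + 2 * (y s - z s) * (Fy s - Fz s)))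
      with (-2 * L * exp (-2 * L * s) * ((y s - z s) * (y s - z s)) + exp (-2 * L * s) * (2 * (y s - z s) * (Fy s - Fz s))) by ring.
    apply (@is_derive_mult R_AbsRing (fun s => exp (-2 * L * s)) (fun s => (y s - z s) * (y s - z s))); auto.
    intros; apply Rmult_comm.
  - intros s Hs. rewrite Rmin_left in Hs by lra. rewrite Rmax_right in Hs by lra.
    apply continuity_pt_filterlim. unfold phi.
    apply (cR_mult (fun s => exp (-2*L*s)) (fun s => (y s - z s) * (y s - z s))).
    apply (cont_of_derive _ _ (-2 * L * exp (-2 * L * s))). auto_derive; auto; ring.
    assert (continuous (fun s => y s - z s) s).
    { apply (@continuous_minus R_UniformSpace R_AbsRing R_NormedModule); [apply Cy|apply Cz]; lra. }
    apply (cR_mult (fun s => y s - z s) (fun s => y s - z s)); auto.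
  - rewrite Rmin_left in Hc by lra. rewrite Rmax_right in Hc by lra.
    assert (Hd : dphi cc <= 0).
    { unfold dphi. assert (0 < exp (-2 * L * cc)) by apply exp_pos.
      assert (Hl := Lip cc ltac:(lra)).
      assert ((y cc - z cc) * (Fy cc - Fz cc) <= L * ((y cc - z cc) * (y cc - z cc))).
      { eapply Rle_trans. apply Rle_abs. rewrite Rabs_mult.
        replace ((y cc - z cc) * (y cc - z cc)) with (Rabs (y cc - z cc) * Rabs (y cc - z cc)).
        pose proof (Rabs_pos (y cc - z cc)). nra.
        rewrite <- Rabs_mult. apply Rabs_right. apply Rle_ge.
        pose proof (Rle_0_sqr (y cc - z cc)) as Hs; unfold Rsqr in Hs; lra. }
      apply Rmult_le_0_l. lra. nra. }
    assert (phi (-1) = 0). { unfold phi. rewrite H0. ring. }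
    assert (phi t <= 0) by nra.
    unfold phi in H1. assert (0 < exp (-2 * L * t)) by apply exp_pos.
    assert ((y t - z t) * (y t - z t) <= 0).
    { apply Rmult_le_reg_l with (exp (-2 * L * t)); auto. lra. }
    assert (y t - z t = 0) by nra. lra.
Qed.

Lemma is_series_zero : is_series (fun _ : nat => 0) 0.
Proof.
  assert (H1 : is_series (fun n => scal (K:=R_AbsRing) 0 ((/2)^n)) (scal (K:=R_AbsRing) 0 (/(1-/2)))).
  { apply (@is_series_scal R_AbsRing R_NormedModule). apply is_series_geom. rewrite Rabs_right; lra. }
  assert (E : scal (K:=R_AbsRing) 0 (/(1-/2)) = 0) by (unfold scal; simpl; unfold mult; simpl; ring).
  rewrite E in H1. eapply is_series_ext; [|exact H1]. intros n; unfold scal; simpl; unfold mult; simpl; ring.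
Qed.

Lemma c_init fh gh n : c fh gh n (-1) = if (n =? 1)%nat then 1 else 0.
Proof.
  destruct n. reflexivity. rewrite c_eq by lia. rewrite RInt_point. unfold zero; simpl. ring.
Qed.

Lemma X_init fh gh rho : X fh gh rho (-1) = rho.
Proof.
  unfold X, PSeries. apply is_series_unique.
  apply (is_series_decr_n _ 2). lia.
  match goal with |- is_series _ ?l => replace l with 0 end.
  eapply is_series_ext; [|apply is_series_zero].
  intros n. simpl. rewrite c_init. simpl. ring.
  simpl. rewrite sum_Sn, sum_O. rewrite !c_init. simpl. unfold plus, opp; simpl. ring.
Qed.

Lemma cont_bounded (h : R -> R) : (forall t, -1 <= t <= 1 -> continuous h t) ->
  exists R0, 0 <= R0 /\ forall t, -1 <= t <= 1 -> Rabs (h t) <= R0.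
Proof.
  intros H.
  destruct (continuity_ab_maj (fun s => Rabs (h s)) (-1) 1) as [m [Hm _]].
  lra. intros cc Hc. apply continuity_pt_filterlim. apply continuous_Rabs_comp. apply H; auto.
  exists (Rabs (h m)). split. apply Rabs_pos. intros t Ht. apply Hm; auto.
Qed.

Lemma lip_poly (fs gs y z M R0 : R) : Rabs fs <= M -> Rabs gs <= M -> Rabs y <= R0 -> Rabs z <= R0 ->
  Rabs ((fs * y ^ 3 + gs * y ^ 2) - (fs * z ^ 3 + gs * z ^ 2)) <= (M * (3 * (R0 * R0) + 2 * R0)) * Rabs (y - z).
Proof.
  intros Hf Hg Hy Hz.
  replace ((fs * y ^ 3 + gs * y ^ 2) - (fs * z ^ 3 + gs * z ^ 2)) with
    ((y - z) * (fs * (y * y + y * z + z * z) + gs * (y + z))) by ring.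
  rewrite Rabs_mult, Rmult_comm. apply Rmult_le_compat_r. apply Rabs_pos.
  assert (0 <= M) by (eapply Rle_trans; [apply Rabs_pos|exact Hf]).
  assert (0 <= R0) by (eapply Rle_trans; [apply Rabs_pos|exact Hy]).
  eapply Rle_trans. apply Rabs_triang. rewrite !Rabs_mult.
  assert (Rabs (y * y + y * z + z * z) <= 3 * (R0 * R0)).
  { eapply Rle_trans. apply Rabs_triang. eapply Rle_trans. apply Rplus_le_compat_r. apply Rabs_triang.
    rewrite !Rabs_mult.
    assert (Rabs y * Rabs y <= R0 * R0) by (apply Rmult_le_compat; auto; apply Rabs_pos).
    assert (Rabs y * Rabs z <= R0 * R0) by (apply Rmult_le_compat; auto; apply Rabs_pos).
    assert (Rabs z * Rabs z <= R0 * R0) by (apply Rmult_le_compat; auto; apply Rabs_pos).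
    lra. }
  assert (Rabs (y + z) <= 2 * R0) by (eapply Rle_trans; [apply Rabs_triang| lra]).
  assert (Rabs fs * Rabs (y * y + y * z + z * z) <= M * (3 * (R0 * R0))) by (apply Rmult_le_compat; auto; apply Rabs_pos).
  assert (Rabs gs * Rabs (y + z) <= M * (2 * R0)) by (apply Rmult_le_compat; auto; apply Rabs_pos).
  lra.
Qed.

Lemma x_eq_X (f g : R -> R) (x : R -> R -> R) M A B rho :
  good (ext f) (ext g) M A B -> B * Rabs rho < 1 ->
  abel_solution f g (fun t => x t rho) rho ->
  forall t, -1 <= t <= 1 -> x t rho = X (ext f) (ext g) rho t.
Proof.
  intros HG Hr [Hi [Hc Hd]] t Ht.
  pose proof HG as (Hf & Hg & HfM & HgM & HA & HB & HAB & HK).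
  set (yt := fun s => x (clamp s) rho).
  assert (Cy : forall s, continuous yt s) by (intros; apply (within_clamp (fun s => x s rho)); auto).
  assert (Dz : forall s, -1 <= s <= 1 -> is_derive (X (ext f) (ext g) rho) s
         (ext f s * (X (ext f) (ext g) rho s) ^ 3 + ext g s * (X (ext f) (ext g) rho s) ^ 2)).
  { intros s Hs. apply X_deriv with M A B; auto. unfold Rabs; destruct Rcase_abs; lra. }
  assert (Cz : forall s, -1 <= s <= 1 -> continuous (X (ext f) (ext g) rho) s).
  { intros s Hs. eapply cont_of_derive. apply Dz; auto. }
  destruct (cont_bounded yt) as [R1 [HR1 HR1']]. intros; apply Cy.
  destruct (cont_bounded (X (ext f) (ext g) rho)) as [R2 [HR2 HR2']]. auto.
  set (R0 := Rmax R1 R2).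
  assert (E : yt t = X (ext f) (ext g) rho t).
  { apply (ode_uniq yt (X (ext f) (ext g) rho)
       (fun s => ext f s * (yt s) ^ 3 + ext g s * (yt s) ^ 2)
       (fun s => ext f s * (X (ext f) (ext g) rho s) ^ 3 + ext g s * (X (ext f) (ext g) rho s) ^ 2)
       (M * (3 * (R0 * R0) + 2 * R0))); auto.
    - assert (0 <= M) by (eapply Rle_trans; [apply Rabs_pos|apply (HfM 0)]).
      assert (0 <= R0) by (unfold R0; eapply Rle_trans; [exact HR1|apply Rmax_l]).
      apply Rmult_le_pos; nra.
    - intros s Hs. apply is_derive_ext_loc with (f := fun s => x s rho).
      + assert (Hp : 0 < Rmin (s + 1) (1 - s)) by (apply Rmin_pos; lra).
        exists (mkposreal _ Hp). intros u Hu0. assert (Hu : Rabs (u - s) < Rmin (s + 1) (1 - s)) by (apply ball_R; exact Hu0).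
        pose proof (Rmin_l (s+1) (1-s)). pose proof (Rmin_r (s+1) (1-s)).
        unfold yt. rewrite clamp_id. auto. unfold Rabs in Hu; destruct (Rcase_abs (u - s)); lra.
      + unfold yt. rewrite !ext_eq, clamp_id by lra. apply Hd. auto.
    - intros s Hs. apply Dz. lra.
    - intros s Hs. apply lip_poly; auto.
      eapply Rle_trans. apply HR1'; auto. apply Rmax_l.
      eapply Rle_trans. apply HR2'; auto. apply Rmax_r.
    - unfold yt. rewrite clamp_id by lra. rewrite Hi, X_init. auto. }
  unfold yt in E. rewrite clamp_id in E; auto.
Qed.

Definition Dn fh gh (n : nat) (t : R) : R := RInt (fun s => fh s * c fh gh n s) (-1) t.

Definition Y fh gh (rho t : R) : R := PSeries (fun n => Dn fh gh n t) rho.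

Lemma good_M fh gh M A B : good fh gh M A B -> 0 <= M.
Proof. intros (Hf & Hg & HfM & _). eapply Rle_trans; [apply Rabs_pos|apply (HfM 0)]. Qed.

Lemma cont_fc fh gh M A B n s : good fh gh M A B -> continuous (fun s => fh s * c fh gh n s) s.
Proof. intros HG. pose proof HG as (Hf & Hg & _).
  apply (cR_mult fh (c fh gh n)); auto. apply c_props; auto. Qed.

Lemma Dn_bound fh gh M A B : good fh gh M A B ->
  forall n t, Rabs t <= 2 -> Rabs (Dn fh gh n t) <= 3 * M * A * B ^ n.
Proof.
  intros HG n t Ht. pose proof HG as (Hf & Hg & HfM & HgM & HA & HB & HAB & HK).
  pose proof (good_M _ _ _ _ _ HG).
  unfold Dn. eapply Rle_trans. apply RInt_bound with (K := M * (A * B ^ n)).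
  intros; eapply cont_fc; eauto.
  intros s Hs. rewrite Rabs_mult. apply Rmult_le_compat; try apply Rabs_pos; auto.
  apply good_cbound with M; auto. eapply between_2; eauto.
  assert (Rabs (t - -1) <= 3) by (unfold Rabs in *; repeat destruct Rcase_abs; lra).
  assert (0 <= M * (A * B ^ n)) by (apply Rmult_le_pos; auto; apply Rmult_le_pos; [lra|apply pow_le; auto]).
  replace (3 * M * A * B ^ n) with (3 * (M * (A * B ^ n))) by ring.
  apply Rmult_le_compat_r; auto.
Qed.

Lemma Y_deriv fh gh M A B rho t : good fh gh M A B -> B * Rabs rho < 1 -> Rabs t < 2 ->
  is_derive (Y fh gh rho) t (fh t * X fh gh rho t).
Proof.
  intros HG Hr Ht. pose proof HG as (Hf & Hg & HfM & HgM & HA & HB & HAB & HK).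
  pose proof (good_M _ _ _ _ _ HG).
  assert (Hq : 0 <= B * Rabs rho < 1) by (split; auto; apply Rmult_le_pos; auto; apply Rabs_pos).
  assert (D : is_derive (fun y => Series (fun n => Dn fh gh n y * rho ^ n)) t
                 (Series (fun n => fh t * c fh gh n t * rho ^ n))).
  { apply (ser_deriv (fun n y => Dn fh gh n y * rho ^ n) (fun n y => fh y * c fh gh n y * rho ^ n)
                 (3 * M * A) (B * Rabs rho) t Hq).
    - intros n y. apply isd_mult_const. unfold Dn. apply (ftc (fun s => fh s * c fh gh n s)). intros; eapply cont_fc; eauto.
    - intros n y Hy. rewrite Rabs_mult, <- RPow_abs, Rpow_mult_distr, <- Rmult_assoc.
      apply Rmult_le_compat_r. apply pow_le, Rabs_pos. apply (Dn_bound fh gh M A B); auto. lra.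
    - intros n y Hy. rewrite Rabs_mult, <- RPow_abs, Rpow_mult_distr, <- Rmult_assoc.
      apply Rmult_le_compat_r. apply pow_le, Rabs_pos. rewrite Rabs_mult.
      assert (Rabs (c fh gh n y) <= A * B ^ n) by (apply good_cbound with M; auto; lra).
      assert (0 <= A * B ^ n) by (apply Rmult_le_pos; [lra|apply pow_le; auto]).
      apply Rle_trans with (M * (A * B ^ n)). apply Rmult_le_compat; auto; apply Rabs_pos.
      replace (3 * M * A * B ^ n) with (3 * (M * (A * B ^ n))) by ring.
      assert (0 <= M * (A * B ^ n)) by (apply Rmult_le_pos; auto). lra.
    - auto. }
  replace (fh t * X fh gh rho t) with (Series (fun n => fh t * c fh gh n t * rho ^ n)).
  exact D. unfold X, PSeries. rewrite <- Series_scal_l. apply Series_ext. intros; ring.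
Qed.

Lemma Y_init fh gh rho : Y fh gh rho (-1) = 0.
Proof.
  unfold Y. rewrite (PSeries_ext _ (fun _ => 0)). apply PSeries_const_0.
  intros n. unfold Dn. rewrite RInt_point. reflexivity.
Qed.

Lemma int_fX fh gh M A B rho : good fh gh M A B -> B * Rabs rho < 1 ->
  is_RInt (fun s => fh s * X fh gh rho s) (-1) 1 (Y fh gh rho 1).
Proof.
  intros HG Hr. pose proof HG as (Hf & Hg & HfM & HgM & HA & HB & HAB & HK).
  replace (Y fh gh rho 1) with (minus (Y fh gh rho 1) (Y fh gh rho (-1))).
  apply (@is_RInt_derive R_CompleteNormedModule).
  - intros s Hs. rewrite Rmin_left, Rmax_right in Hs by lra. apply Y_deriv with M A B; auto.
    unfold Rabs; destruct Rcase_abs; lra.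
  - intros s Hs. rewrite Rmin_left, Rmax_right in Hs by lra.
    apply (cR_mult fh (X fh gh rho)); auto. eapply cont_of_derive. apply X_deriv with M A B; auto.
    unfold Rabs; destruct Rcase_abs; lra.
  - rewrite Y_init. unfold minus, plus, opp; simpl. ring.
Qed.

Lemma Rn_c2 fh gh s : Rn fh gh (c fh gh) 2 s = gh s.
Proof. unfold Rn, PS_mult. cbn [sum_f_R0 Nat.sub]. rewrite !c0, !c1. ring. Qed.

Lemma Rn_c3 fh gh s : Rn fh gh (c fh gh) 3 s = fh s + 2 * gh s * c fh gh 2 s.
Proof. unfold Rn, PS_mult. cbn [sum_f_R0 Nat.sub]. rewrite !c0, !c1. ring. Qed.

Lemma c2_eq fh gh t : c fh gh 2 t = RInt gh (-1) t.
Proof.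
  rewrite c_eq by lia. simpl pred. rewrite Rplus_0_l. apply RInt_ext.
  intros s _. rewrite Rn_cs, Rn_c2. reflexivity.
Qed.

Lemma c3_eq fh gh (Hf : forall s, continuous fh s) (Hg : forall s, continuous gh s) t :
  c fh gh 3 t = RInt fh (-1) t + (c fh gh 2 t) ^ 2.
Proof.
  rewrite c_eq by lia. simpl pred. rewrite Rplus_0_l.
  rewrite (RInt_ext _ (fun s => fh s + 2 * gh s * c fh gh 2 s)).
  2: intros s _; rewrite Rn_cs, Rn_c3; reflexivity.
  assert (C2 : forall s, is_derive (c fh gh 2) s (gh s)).
  { intros s. rewrite <- (Rn_c2 fh gh s). apply c_props; auto. }
  assert (E : RInt (fun s => 2 * gh s * c fh gh 2 s) (-1) t = (c fh gh 2 t) ^ 2).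
  { apply is_RInt_unique.
    replace ((c fh gh 2 t) ^ 2) with (minus ((c fh gh 2 t) ^ 2) ((c fh gh 2 (-1)) ^ 2)).
    apply (@is_RInt_derive R_CompleteNormedModule (fun s => (c fh gh 2 s) ^ 2)).
    - intros s _. auto_derive. exists (gh s). apply C2. replace (Derive (fun x => c fh gh 2 x) s) with (gh s) by (symmetry; apply is_derive_unique; apply C2). ring.
    - intros s _. apply (cR_mult (fun s => 2 * gh s) (c fh gh 2)).
      apply (cR_mult (fun _ => 2) gh); auto. apply cR_const. eapply cont_of_derive; apply C2.
    - rewrite c_init. simpl. unfold minus, plus, opp; simpl. ring. }
  rewrite <- E. apply (@RInt_plus R_CompleteNormedModule).
  apply (@ex_RInt_continuous R_CompleteNormedModule). intros; auto.
  apply (@ex_RInt_continuous R_CompleteNormedModule). intros.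
  apply (cR_mult (fun s => 2 * gh s) (c fh gh 2)).
  apply (cR_mult (fun _ => 2) gh); auto. apply cR_const. eapply cont_of_derive; apply C2.
Qed.

Lemma is_pseries_ind K x : is_pseries (fun n => if (n =? 0)%nat then K else 0) x K.
Proof.
  unfold is_pseries. apply (is_series_decr_n _ 1). lia.
  simpl pred. rewrite sum_O.
  match goal with |- is_series _ ?l => replace l with 0 end.
  eapply is_series_ext; [|apply is_series_zero].
  intros n. simpl. unfold scal; simpl; unfold mult; simpl. ring.
  unfold scal, plus, opp; simpl; unfold mult, plus, opp; simpl. unfold one; simpl. ring.
Qed.

Lemma choose_AB (M : R) : 0 < M ->
  let A := / (216 * M + 1) in let B := 216 * M + 1 in
  0 < A /\ 0 <= B /\ A * B = 1 /\ 3 * (M * (64 * (A*A*A) + 8 * (A*A))) <= A.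
Proof.
  intros HM A B.
  assert (HB : 0 < B) by (unfold B; lra).
  assert (HA : 0 < A) by (unfold A; apply Rinv_0_lt_compat; lra).
  assert (HAB : A * B = 1) by (unfold A, B; field; lra).
  assert (HA1 : A <= 1).
  { unfold A. rewrite <- Rinv_1. apply Rinv_le_contravar; lra. }
  split; auto. split; [lra|]. split; auto.
  assert (H1 : 3 * M * (64 * (A * A) + 8 * A) <= 216 * M * A).
  { assert (A * A <= A) by nra. nra. }
  assert (H2 : 216 * M * A <= 1).
  { replace 1 with (A * B) by auto. unfold B. nra. }
  replace (3 * (M * (64 * (A * A * A) + 8 * (A * A)))) with ((3 * M * (64 * (A * A) + 8 * A)) * A) by ring.
  nra.
Qed.

Theorem lemma2 (f g : R -> R) (x : R -> R -> R) (delta : R) :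
  analytic_on_I f -> analytic_on_I g ->
  0 < delta ->
  (forall rho, Rabs rho < delta -> abel_solution f g (fun t => x t rho) rho) ->
  (forall j : nat, (1 <= j <= 3)%nat -> ex_derive_n (fun rho => Hfun f g x 1 rho) j 0) /\
  (forall j : nat, (1 <= j <= 2)%nat ->
     Derive_n (fun rho => Hfun f g x 1 rho) j 0
     = INR (Factorial.fact j) * RInt (fun t => f t * (prim g t) ^ (j - 1)) (-1) 1) /\
  Derive_n (fun rho => Hfun f g x 1 rho) 3 0
  = INR (Factorial.fact 3) * RInt (fun t => f t * (prim g t) ^ 2) (-1) 1
    + INR (Factorial.fact 3) * RInt (fun t => f t * prim f t) (-1) 1.
Proof.
  intros Haf Hag Hdelta Hsol.
  pose proof (ext_cont f Haf) as Hf. pose proof (ext_cont g Hag) as Hg.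
  destruct (ext_bound f Haf) as [Mf [HMf HfM]].
  destruct (ext_bound g Hag) as [Mg [HMg HgM]].
  set (M := Mf + Mg).
  assert (HM : 0 < M) by (unfold M; lra).
  destruct (choose_AB M HM) as (HA & HB & HAB & HK).
  set (A := / (216 * M + 1)) in *. set (B := 216 * M + 1) in *.
  assert (HG : good (ext f) (ext g) M A B).
  { repeat split; auto; intros s.
    eapply Rle_trans; [apply HfM| unfold M; lra].
    eapply Rle_trans; [apply HgM| unfold M; lra]. }
  assert (HB' : 0 < B) by (unfold B; lra).
  set (fh := ext f) in *. set (gh := ext g) in *.
  set (Ig := RInt gh (-1) 1).
  set (e := fun n => Dn fh gh n 1 + (if (n =? 0)%nat then Ig else 0)).
  assert (Hr : 0 < Rmin delta (/ B)) by (apply Rmin_pos; auto; apply Rinv_0_lt_compat; auto).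
  assert (Heq : forall rho, Rabs rho < Rmin delta (/ B) -> Hfun f g x 1 rho = PSeries e rho).
  { intros rho Hrho.
    assert (Hrd : Rabs rho < delta) by (eapply Rlt_le_trans; [exact Hrho| apply Rmin_l]).
    assert (HrB : B * Rabs rho < 1).
    { assert (Rabs rho < / B) by (eapply Rlt_le_trans; [exact Hrho| apply Rmin_r]).
      apply (Rmult_lt_compat_l B) in H; auto. rewrite Rinv_r in H; lra. }
    assert (Hx := x_eq_X f g x M A B rho HG HrB (Hsol rho Hrd)).
    unfold Hfun.
    rewrite (RInt_ext _ (fun s => fh s * X fh gh rho s + gh s)).
    2: { intros s Hs. rewrite Rmin_left, Rmax_right in Hs by lra.
         unfold fh, gh. rewrite !ext_eq by lra. rewrite Hx by lra. reflexivity. }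
    assert (HI := int_fX fh gh M A B rho HG HrB).
    rewrite (@RInt_plus R_CompleteNormedModule (fun s => fh s * X fh gh rho s) gh).
    2: { exists (Y fh gh rho 1). auto. }
    2: { apply (@ex_RInt_continuous R_CompleteNormedModule). intros; auto. }
    rewrite (is_RInt_unique _ _ _ _ HI).
    symmetry. apply is_pseries_unique.
    apply (is_pseries_ext (PS_plus (fun n => Dn fh gh n 1) (fun n => if (n =? 0)%nat then Ig else 0))).
    intros n; reflexivity.
    apply (@is_pseries_plus R_AbsRing R_NormedModule).
    - apply PSeries_correct. apply CV_radius_inside.
      apply rad_geom with (3 * M * A) B; auto.
      intros n. apply (Dn_bound fh gh M A B HG). rewrite Rabs_R1; lra.
      eapply Rlt_le_trans; [exact Hrho| apply Rmin_r].
    - apply is_pseries_ind. }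
  assert (Hloc : locally 0 (fun rho => PSeries e rho = Hfun f g x 1 rho)).
  { exists (mkposreal _ Hr). intros rho Hrho. symmetry. apply Heq.
    assert (H := proj1 (ball_R 0 _ rho) Hrho). simpl in H. rewrite Rminus_0_r in H. auto. }
  assert (Hloc' : locally 0 (fun rho => Hfun f g x 1 rho = PSeries e rho)).
  { eapply filter_imp; [|exact Hloc]. intros; auto. }
  assert (Hrad : Rbar_lt 0 (CV_radius e)).
  { rewrite <- Rabs_R0. apply rad_geom with (3 * M * A + Rabs Ig) B; auto.
    intros n. unfold e.
    assert (H1 := Dn_bound fh gh M A B HG n 1 ltac:(rewrite Rabs_R1; lra)).
    destruct n.
    - simpl. rewrite Rmult_1_r. eapply Rle_trans. apply Rabs_triang. rewrite Rmult_1_r in H1. lra.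
    - replace (if (S n =? 0)%nat then Ig else 0) with 0 by reflexivity. rewrite Rplus_0_r.
      eapply Rle_trans. exact H1. apply Rmult_le_compat_r. apply pow_le; lra.
      pose proof (Rabs_pos Ig). lra.
    - rewrite Rabs_R0. apply Rinv_0_lt_compat; auto. }
  assert (HD : forall j, Derive_n (fun rho => Hfun f g x 1 rho) j 0 = e j * INR (Factorial.fact j)).
  { intros j. transitivity (Derive_n (PSeries e) j 0). apply Derive_n_ext_loc; exact Hloc'.
    apply Derive_n_coef; auto. }
  assert (Hprimg : forall s, -1 <= s <= 1 -> c fh gh 2 s = prim g s).
  { intros s Hs. rewrite c2_eq. unfold prim. apply RInt_ext. intros u Hu.
    unfold gh. apply ext_eq. unfold Rmin, Rmax in Hu; destruct Rle_dec in Hu; lra. }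
  assert (Hprimf : forall s, -1 <= s <= 1 -> RInt fh (-1) s = prim f s).
  { intros s Hs. unfold prim. apply RInt_ext. intros u Hu.
    unfold fh. apply ext_eq. unfold Rmin, Rmax in Hu; destruct Rle_dec in Hu; lra. }
  split; [|split].
  - intros j Hj. apply (ex_derive_n_ext_loc (PSeries e)); auto.
    apply ex_derive_n_PSeries. rewrite Rabs_R0. auto.
  - intros j Hj. rewrite HD. unfold e.
    destruct j as [|j]. lia. cbn [Nat.eqb]. rewrite Rplus_0_r, Rmult_comm. f_equal. unfold Dn.
    apply RInt_ext. intros s Hs. rewrite Rmin_left, Rmax_right in Hs by lra.
    unfold fh. rewrite ext_eq by lra. f_equal.
    destruct (Nat.eq_dec j 0). subst. rewrite c1. simpl. reflexivity.
    assert (j = 1%nat) by lia. subst. rewrite Hprimg by lra. simpl. rewrite Rmult_1_r. reflexivity.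
  - rewrite HD. unfold e. cbn [Nat.eqb]. rewrite Rplus_0_r. unfold Dn.
    rewrite (RInt_ext _ (fun t => f t * prim g t ^ 2 + f t * prim f t)).
    2: { intros s Hs. rewrite Rmin_left, Rmax_right in Hs by lra.
         rewrite c3_eq by auto. rewrite Hprimf, Hprimg by lra. unfold fh. rewrite ext_eq by lra. rewrite Rmult_plus_distr_l. apply Rplus_comm. }
    assert (Cc2 : forall s, continuous (c fh gh 2) s) by (intros; apply c_props; auto).
    assert (CF : forall s, continuous (fun s => RInt fh (-1) s) s).
    { intros s. eapply cont_of_derive. apply (ftc fh Hf). }
    rewrite (@RInt_plus R_CompleteNormedModule (fun t => f t * prim g t ^ 2) (fun t => f t * prim f t)).
    + unfold plus; simpl. ring.
    + apply (@ex_RInt_ext R_NormedModule (fun t => fh t * (c fh gh 2 t * (c fh gh 2 t * 1)))).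
      intros s Hs. rewrite Rmin_left, Rmax_right in Hs by lra.
      rewrite Hprimg by lra. unfold fh. rewrite ext_eq by lra. simpl. reflexivity.
      apply (@ex_RInt_continuous R_CompleteNormedModule). intros s _.
      apply (cR_mult fh); auto. apply (cR_mult (c fh gh 2)); auto.
      apply (cR_mult (c fh gh 2)); auto. apply cR_const.
    + apply (@ex_RInt_ext R_NormedModule (fun t => fh t * RInt fh (-1) t)).
      intros s Hs. rewrite Rmin_left, Rmax_right in Hs by lra.
      rewrite Hprimf by lra. unfold fh. rewrite ext_eq by lra. reflexivity.
      apply (@ex_RInt_continuous R_CompleteNormedModule). intros s _.
      apply (cR_mult fh); auto.
Qed.
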